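(* Let $N=10$ and $f(u)=e^{g(u)}$ where $g\in C^3[0,\infty)$ satisfies $g'>0$, $g''>0$, $g'^2-g''\ge0$, $2g''^2-g'g'''>0$ on $[0,\infty)$. Let $v(r)=F^{-1}\big[\frac{r^2}{16}e^{-x(t)}\big]$, $t=-\log r$, for $0<r\le R$, with $x$, $t_0$, $R$ as in the context. Then $v''+\frac{N-1}{r}v'+f(v)\ge0$ for $0<r\le R$.
   Context: Let $F(u)=\int_u^\infty\frac{ds}{f(s)}$, $\eta(y)=F^{-1}(e^{-y})$ and $h(y)=1-f'(\eta(y))F(\eta(y))$ for $y\ge-\log F(0)$. Under the hypotheses, $h(y)\to0$ as $y\to\infty$ and $h'<0$, and there exist $t_0\in\mathbb{R}$ and a $C^2$ function $x:[t_0,\infty)\to\mathbb{R}$ such that $4(e^{x(t)}-1)=h(x(t)+2t+\log16)$ for all $t\ge t_0$, $x(t_0)+2t_0+\log16=-\log F(0)$, $|x(t)|\le1$ for all large $t$, and $\xi(t):=x(t)+2t+\log16$ is strictly increasing; for each $t$ the value $x(t)$ is the unique solution of the implicit equation with $x+2t+\log 16\ge -\log F(0)$. Set $R=e^{-t_0}$; then $v=\eta(\xi(t))$ is defined on $(0,R]$ with $v(R)=0$. *)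

(* Defs.v *)
From Stdlib Require Import Reals.
From Coquelicot Require Import Coquelicot.
Open Scope R_scope.

(* Derivative of f at x relative to the set D (one-sided at endpoints of
   an interval): limit of the difference quotient as y -> x, y in D, y <> x. *)
Definition derive_within (D : R -> Prop) (f : R -> R) (x l : R) : Prop :=
  filterlim (fun y => (f y - f x) / (y - x))
    (within (fun y => D y /\ y <> x) (locally x)) (locally l).

Definition deriv_on (D : R -> Prop) (f f' : R -> R) : Prop :=
  forall x, D x -> derive_within D f x (f' x).

Definition contin_on (D : R -> Prop) (f : R -> R) : Prop :=
  forall x, D x -> filterlim f (within D (locally x)) (locally (f x)).

Definition fexp (g : R -> R) (u : R) : R := exp (g u).

Definition Fint (g : R -> R) (u : R) : R :=
  RInt_gen (fun s => / fexp g s) (at_point u) (Rbar_locally p_infty).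

(* Main.v *)
Require Import Defs.
From Stdlib Require Import Reals Lra Psatz ClassicalEpsilon.
From Coquelicot Require Import Coquelicot.
Open Scope R_scope.

Lemma loc_intro (x : R) (S : R -> Prop) :
  (exists d, 0 < d /\ forall y, Rabs (y - x) < d -> S y) -> locally x S.
Proof.
  intros [d [Hd H]]. exists (mkposreal d Hd). intros y Hy. apply H.
  exact Hy.
Qed.

Lemma loc_elim (x : R) (S : R -> Prop) :
  locally x S -> exists d, 0 < d /\ forall y, Rabs (y - x) < d -> S y.
Proof.
  intros [e He]. exists e. split. apply cond_pos. intros y Hy. apply He. exact Hy.
Qed.

Lemma fl_eps {T} (F : (T -> Prop) -> Prop) (FF : Filter F) (f : T -> R) (l : R) :
  filterlim f F (locally l) -> forall e, 0 < e -> F (fun y => Rabs (f y - l) < e).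
Proof.
  intros H e He. apply (H (fun z => Rabs (z - l) < e)). apply loc_intro. exists e. split; auto.
Qed.

Lemma fl_eps_intro {T} (F : (T -> Prop) -> Prop) (FF : Filter F) (f : T -> R) (l : R) :
  (forall e, 0 < e -> F (fun y => Rabs (f y - l) < e)) -> filterlim f F (locally l).
Proof.
  intros H P HP. apply loc_elim in HP. destruct HP as [d [Hd HP]].
  unfold filtermap. apply filter_imp with (2 := H d Hd). intros y Hy. apply HP. exact Hy.
Qed.

Lemma within_eps (D : R -> Prop) (x : R) (P : R -> Prop) :
  within D (locally x) P <-> exists d, 0 < d /\ forall y, D y -> Rabs (y - x) < d -> P y.
Proof.
  split.
  - intros H. apply loc_elim in H. destruct H as [d [Hd H]]. exists d. split; auto.
  - intros [d [Hd H]]. unfold within. apply loc_intro. exists d. split; auto.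
Qed.

Lemma fl_plus {T} {F : (T -> Prop) -> Prop} {FF : Filter F} (a b : T -> R) la lb :
  filterlim a F (locally la) -> filterlim b F (locally lb) ->
  filterlim (fun y => a y + b y) F (locally (la + lb)).
Proof. intros Ha Hb. eapply filterlim_comp_2; eauto. apply (filterlim_plus la lb). Qed.

Lemma fl_mult {T} {F : (T -> Prop) -> Prop} {FF : Filter F} (a b : T -> R) la lb :
  filterlim a F (locally la) -> filterlim b F (locally lb) ->
  filterlim (fun y => a y * b y) F (locally (la * lb)).
Proof. intros Ha Hb. eapply filterlim_comp_2; eauto. apply (filterlim_mult la lb). Qed.

Lemma fl_const {T} {F : (T -> Prop) -> Prop} {FF : Filter F} (c : R) :
  filterlim (fun _ : T => c) F (locally c).
Proof. apply filterlim_const. Qed.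

Lemma fl_cont {T} {F : (T -> Prop) -> Prop} {FF : Filter F} (a : T -> R) (h : R -> R) la :
  filterlim a F (locally la) -> continuous h la ->
  filterlim (fun y => h (a y)) F (locally (h la)).
Proof. intros Ha Hh. eapply filterlim_comp; eauto. Qed.

Lemma fl_inv {T} {F : (T -> Prop) -> Prop} {FF : Filter F} (a : T -> R) la :
  filterlim a F (locally la) -> la <> 0 ->
  filterlim (fun y => / a y) F (locally (/ la)).
Proof.
  intros Ha Hl. apply (fl_cont a Rinv la Ha).
  apply continuity_pt_filterlim. apply continuity_pt_inv; auto.
  apply continuity_pt_id.
Qed.

Lemma fl_id_within (D : R -> Prop) x :
  filterlim (fun y => y) (within D (locally x)) (locally x).
Proof.
  intros P HP. unfold filtermap, within. apply filter_imp with (2 := HP). auto.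
Qed.

Lemma fl_to_within {T} {F : (T -> Prop) -> Prop} {FF : Filter F} (a : T -> R) (E : R -> Prop) c :
  filterlim a F (locally c) -> F (fun y => E (a y)) ->
  filterlim a F (within E (locally c)).
Proof.
  intros Ha HE P HP. unfold filtermap. unfold within in HP.
  apply Ha in HP. unfold filtermap in HP.
  apply filter_imp with (2 := filter_and _ _ HP HE). intros y [H1 H2]. auto.
Qed.

Lemma within_D (D : R -> Prop) x : within D (locally x) D.
Proof. unfold within. apply filter_forall. auto. Qed.

Definition cara (D : R -> Prop) (f : R -> R) (x l : R) : Prop :=
  exists Q : R -> R, Q x = l /\ (forall y, D y -> f y - f x = Q y * (y - x)) /\
    filterlim Q (within D (locally x)) (locally l).

Lemma dw_cara D f x l : derive_within D f x l -> cara D f x l.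
Proof.
  intros H.
  exists (fun y => if Req_EM_T y x then l else (f y - f x) / (y - x)).
  split; [|split].
  - destruct (Req_EM_T x x); congruence.
  - intros y Dy. destruct (Req_EM_T y x) as [e|n].
    + subst. ring.
    + field. lra.
  - intros P HP. unfold filtermap. unfold derive_within in H.
    specialize (H P HP). unfold filtermap, within in H. unfold within.
    apply filter_imp with (2 := H). intros y Hy Dy.
    destruct (Req_EM_T y x) as [e|n].
    + apply locally_singleton. exact HP.
    + apply Hy. auto.
Qed.

Lemma cara_dw D f x l : cara D f x l -> derive_within D f x l.
Proof.
  intros [Q [HQx [HQ Hl]]]. unfold derive_within.
  intros P HP. specialize (Hl P HP). unfold filtermap, within in *.
  apply filter_imp with (2 := Hl). intros y Hy [Dy ny].
  replace ((f y - f x) / (y - x)) with (Q y). auto.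
  rewrite HQ; auto. field. lra.
Qed.

Lemma cara_cont D f x l : cara D f x l -> filterlim f (within D (locally x)) (locally (f x)).
Proof.
  intros [Q [HQx [HQ Hl]]].
  apply filterlim_ext_loc with (fun y => f x + Q y * (y - x)).
  - unfold within. apply filter_forall. intros y Dy. rewrite <- HQ; auto. ring.
  - assert (H : filterlim (fun y => f x + Q y * (y - x)) (within D (locally x)) (locally (f x + l * (x + - x)))).
    apply fl_plus. apply fl_const. apply fl_mult. auto.
    apply fl_plus. apply fl_id_within. apply fl_const.
    replace (f x + l * (x + - x)) with (f x) in H by ring. exact H.
Qed.

Lemma cara_ext D f g x l l' : cara D f x l -> (forall y, D y -> f y = g y) -> D x -> l = l' -> cara D g x l'.
Proof.
  intros [Q [HQx [HQ Hl]]] Hfg Dx <-. exists Q. split; auto. split; auto.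
  intros y Dy. rewrite <- !Hfg; auto.
Qed.

Lemma cara_sub D D' f x l : cara D f x l -> (forall y, D' y -> D y) -> cara D' f x l.
Proof.
  intros [Q [HQx [HQ Hl]]] HD. exists Q. split; auto. split; auto.
  intros P HP. specialize (Hl P HP). unfold filtermap, within in *.
  apply filter_imp with (2 := Hl). auto.
Qed.

Lemma cara_const D c x : cara D (fun _ => c) x 0.
Proof.
  exists (fun _ => 0). split; auto. split. intros; ring. apply fl_const.
Qed.

Lemma cara_id D x : cara D (fun y => y) x 1.
Proof.
  exists (fun _ => 1). split; auto. split. intros; ring. apply fl_const.
Qed.

Lemma cara_plus D f g x lf lg : cara D f x lf -> cara D g x lg ->
  cara D (fun y => f y + g y) x (lf + lg).
Proof.
  intros [Q [HQx [HQ Hl]]] [Q' [HQx' [HQ' Hl']]].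
  exists (fun y => Q y + Q' y). split. subst; auto. split.
  intros y Dy. specialize (HQ y Dy). specialize (HQ' y Dy). nra.
  apply fl_plus; auto.
Qed.

Lemma cara_mult D f g x lf lg : cara D f x lf -> cara D g x lg ->
  cara D (fun y => f y * g y) x (lf * g x + f x * lg).
Proof.
  intros Hf Hg. pose proof (cara_cont _ _ _ _ Hf) as Cf.
  destruct Hf as [Q [HQx [HQ Hl]]]. destruct Hg as [Q' [HQx' [HQ' Hl']]].
  exists (fun y => Q y * g x + f y * Q' y). split. subst; auto. split.
  intros y Dy. specialize (HQ y Dy). specialize (HQ' y Dy).
  replace (f y * g y - f x * g x) with ((f y - f x) * g x + f y * (g y - g x)) by ring.
  rewrite HQ, HQ'. ring.
  apply fl_plus. apply fl_mult; auto. apply fl_const. apply fl_mult; auto.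
Qed.

Lemma cara_comp D E f phi x lf lp :
  cara E f (phi x) lf -> cara D phi x lp -> (forall y, D y -> E (phi y)) ->
  cara D (fun y => f (phi y)) x (lf * lp).
Proof.
  intros Hf Hp HDE. pose proof (cara_cont _ _ _ _ Hp) as Cp.
  destruct Hf as [Q [HQx [HQ Hl]]]. destruct Hp as [Q' [HQx' [HQ' Hl']]].
  exists (fun y => Q (phi y) * Q' y). split. subst; auto. split.
  intros y Dy. rewrite HQ; auto. rewrite HQ'; auto. ring.
  apply fl_mult; auto. eapply filterlim_comp; [|exact Hl].
  apply fl_to_within; auto. unfold within. apply filter_forall. auto.
Qed.

Lemma cara_of_derive D h x l : is_derive h x l -> cara D h x l.
Proof.
  intros H. apply is_derive_Reals in H.
  exists (fun y => if Req_EM_T y x then l else (h y - h x) / (y - x)).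
  split; [|split].
  - destruct (Req_EM_T x x); congruence.
  - intros y Dy. destruct (Req_EM_T y x) as [e|n].
    + subst. ring.
    + field. lra.
  - apply fl_eps_intro. apply within_filter. apply locally_filter.
    intros e He. destruct (H e He) as [d Hd].
    apply within_eps. exists d. split. apply cond_pos. intros y Dy Hy.
    destruct (Req_EM_T y x) as [ee|n].
    + rewrite Rminus_eq_0, Rabs_R0. auto.
    + specialize (Hd (y - x)). replace (x + (y - x)) with y in Hd by ring.
      apply Hd. lra. auto.
Qed.

Lemma exp_le_mono x y : x <= y -> exp x <= exp y.
Proof. intros [H|H]. left; apply exp_increasing; auto. subst; lra. Qed.
Lemma cara_unique D f x l1 l2 : cara D f x l1 -> cara D f x l2 ->
  (forall d, 0 < d -> exists y, D y /\ y <> x /\ Rabs (y - x) < d) -> l1 = l2.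
Proof.
  intros [Q [HQx [HQ Hl]]] [Q' [HQx' [HQ' Hl']]] Hacc.
  destruct (Req_dec l1 l2) as [|Hne]; auto. exfalso.
  set (e := Rabs (l1 - l2) / 2).
  assert (He : 0 < e). unfold e. assert (0 < Rabs (l1 - l2)) by (apply Rabs_pos_lt; lra). lra.
  pose proof (fl_eps _ _ _ _ Hl e He) as H1.
  pose proof (fl_eps _ _ _ _ Hl' e He) as H2.
  apply within_eps in H1. apply within_eps in H2.
  destruct H1 as [d1 [Hd1 H1]]. destruct H2 as [d2 [Hd2 H2]].
  destruct (Hacc (Rmin d1 d2)) as [y [Dy [ny Hy]]]. apply Rmin_pos; auto.
  assert (Q y = Q' y).
  { apply Rmult_eq_reg_r with (y - x). rewrite <- HQ, <- HQ'; auto. lra. }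
  specialize (H1 y Dy). specialize (H2 y Dy).
  assert (Rabs (y - x) < d1) by (eapply Rlt_le_trans; [exact Hy| apply Rmin_l]).
  assert (Rabs (y - x) < d2) by (eapply Rlt_le_trans; [exact Hy| apply Rmin_r]).
  specialize (H1 H0). specialize (H2 H3). rewrite H in H1.
  assert (Rabs (l1 - l2) <= Rabs (Q' y - l1) + Rabs (Q' y - l2)).
  { replace (l1 - l2) with (-(Q' y - l1) + (Q' y - l2)) by ring.
    eapply Rle_trans. apply Rabs_triang. rewrite Rabs_Ropp. lra. }
  unfold e in *. lra.
Qed.

Lemma cara_is_derive D f h y l : cara D f y l ->
  (exists r, 0 < r /\ forall z, Rabs (z - y) < r -> D z /\ h z = f z) -> is_derive h y l.
Proof.
  intros [Q [HQx [HQ Hl]]] [r [Hr Hz]].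
  apply is_derive_Reals. intros e He.
  pose proof (fl_eps _ _ _ _ Hl e He) as H1.
  apply within_eps in H1. destruct H1 as [d [Hd H1]].
  exists (mkposreal (Rmin d r) (Rmin_pos _ _ Hd Hr)). simpl. intros h0 Hh0 Hh.
  assert (Rabs h0 < d) by (eapply Rlt_le_trans; [exact Hh| apply Rmin_l]).
  assert (Rabs h0 < r) by (eapply Rlt_le_trans; [exact Hh| apply Rmin_r]).
  destruct (Hz (y + h0)) as [Dz Ez]. replace (y + h0 - y) with h0 by ring. auto.
  destruct (Hz y) as [Dy Ey]. rewrite Rminus_eq_0, Rabs_R0. auto.
  rewrite Ez, Ey. rewrite HQ; auto.
  replace (Q (y + h0) * (y + h0 - y) / h0) with (Q (y + h0)) by (field; auto).
  apply H1; auto. replace (y + h0 - y) with h0 by ring. auto.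
Qed.

Definition clamp (a b z : R) := Rmax a (Rmin b z).

Lemma clamp_lip a b y z : a <= b -> Rabs (clamp a b y - clamp a b z) <= Rabs (y - z).
Proof.
  intros. unfold clamp, Rmax, Rmin.
  repeat destruct Rle_dec; unfold Rabs; repeat destruct Rcase_abs; lra.
Qed.

Lemma clamp_in a b z : a <= b -> a <= clamp a b z <= b.
Proof. intros. unfold clamp, Rmax, Rmin. repeat destruct Rle_dec; lra. Qed.

Lemma clamp_id a b z : a <= z <= b -> clamp a b z = z.
Proof. intros. unfold clamp, Rmax, Rmin. repeat destruct Rle_dec; lra. Qed.

Lemma clamp_cont a b z : a <= b ->
  filterlim (clamp a b) (locally z) (within (fun w => a <= w <= b) (locally (clamp a b z))).
Proof.
  intros Hab. apply fl_to_within.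
  apply fl_eps_intro. apply locally_filter. intros e He. apply loc_intro. exists e. split; auto.
  intros y Hy. eapply Rle_lt_trans. apply clamp_lip; auto. auto.
  apply filter_forall. intros. apply clamp_in; auto.
Qed.

Lemma mono_lemma a b f d : a < b ->
  (forall y, a <= y <= b -> cara (fun z => a <= z <= b) f y (d y)) ->
  (forall y, a <= y <= b -> d y <= 0) -> f b <= f a.
Proof.
  intros Hab Hc Hd.
  set (ft := fun z => f (clamp a b z)).
  destruct (MVT_gen ft a b d) as [c [Hc1 Hc2]].
  - intros y Hy. rewrite Rmin_left in Hy by lra. rewrite Rmax_right in Hy by lra.
    apply (cara_is_derive (fun z => a <= z <= b) f). apply Hc; lra.
    exists (Rmin (y - a) (b - y)). split. apply Rmin_pos; lra.
    intros z Hz. assert (Rabs (z - y) < y - a) by (eapply Rlt_le_trans; [exact Hz| apply Rmin_l]).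
    assert (Rabs (z - y) < b - y) by (eapply Rlt_le_trans; [exact Hz| apply Rmin_r]).
    revert H H0. unfold Rabs. destruct Rcase_abs; intros; split; try lra;
    unfold ft; rewrite clamp_id; auto; lra.
  - intros y Hy. rewrite Rmin_left in Hy by lra. rewrite Rmax_right in Hy by lra.
    apply continuity_pt_filterlim. unfold ft.
    eapply filterlim_comp. apply clamp_cont. lra.
    rewrite (clamp_id a b y) by lra. apply cara_cont with (d y). apply Hc. lra.
  - rewrite Rmin_left in Hc1 by lra. rewrite Rmax_right in Hc1 by lra.
    unfold ft in Hc2. rewrite !clamp_id in Hc2 by lra.
    specialize (Hd c Hc1). nra.
Qed.
Definition kk (g : R -> R) (s : R) := / exp (g (Rmax 0 s)).

Lemma rmax_cont z :
  filterlim (Rmax 0) (locally z) (within (fun u => 0 <= u) (locally (Rmax 0 z))).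
Proof.
  apply fl_to_within.
  apply fl_eps_intro. apply locally_filter. intros e He. apply loc_intro. exists e. split; auto.
  intros y Hy. eapply Rle_lt_trans; [|exact Hy]. unfold Rmax.
  repeat destruct Rle_dec; unfold Rabs; repeat destruct Rcase_abs; lra.
  apply filter_forall. intros. apply Rmax_l.
Qed.

Lemma kk_cont g : contin_on (fun u => 0 <= u) g -> forall z, continuous (kk g) z.
Proof.
  intros Hgc z. unfold kk. unfold continuous.
  apply fl_inv. 2: apply Rgt_not_eq, exp_pos.
  apply (fl_cont (fun y => g (Rmax 0 y)) exp).
  eapply filterlim_comp. apply rmax_cont. apply Hgc. apply Rmax_l.
  apply continuity_pt_filterlim. apply derivable_continuous_pt. apply derivable_pt_exp.
Qed.

Lemma kk_pos g s : 0 < kk g s.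
Proof. unfold kk. apply Rinv_0_lt_compat, exp_pos. Qed.

Lemma kk_eq g s : 0 <= s -> kk g s = / exp (g s).
Proof. intros. unfold kk. rewrite Rmax_right; auto. Qed.

Lemma kk_ex g a b : contin_on (fun u => 0 <= u) g -> ex_RInt (kk g) a b.
Proof. intros. apply (ex_RInt_continuous (V := R_CompleteNormedModule)). intros. apply kk_cont; auto. Qed.

Lemma kk_derive g a M : contin_on (fun u => 0 <= u) g ->
  is_derive (fun M => RInt (kk g) a M) M (kk g M).
Proof.
  intros Hgc. apply (is_derive_RInt _ _ a). apply filter_forall. intros. apply RInt_correct, kk_ex; auto.
  apply kk_cont; auto.
Qed.

Lemma kk_chasles g a b c : contin_on (fun u => 0 <= u) g ->
  RInt (kk g) a c = RInt (kk g) a b + RInt (kk g) b c.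
Proof.
  intros. symmetry. apply (RInt_Chasles (kk g) a b c); apply kk_ex; auto.
Qed.

Lemma kk_int_pos g a b : contin_on (fun u => 0 <= u) g -> a < b -> 0 < RInt (kk g) a b.
Proof.
  intros Hgc Hab. 
  assert (H := RInt_lt (fun _ => 0) (kk g) a b Hab).
  rewrite RInt_const in H. unfold scal in H; simpl in H. unfold mult in H; simpl in H.
  rewrite Rmult_0_r in H. apply H.
  intros; apply kk_cont; auto. intros; apply continuous_const.
  intros; apply kk_pos.
Qed.

Lemma kk_int_ge0 g a b : contin_on (fun u => 0 <= u) g -> a <= b -> 0 <= RInt (kk g) a b.
Proof.
  intros Hgc Hab. destruct (Req_dec a b). subst. rewrite RInt_point. apply Rle_refl.
  left. apply kk_int_pos; auto. lra.
Qed.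
Lemma cara_smooth D h f x dh l : is_derive h (f x) dh -> cara D f x l ->
  cara D (fun y => h (f y)) x (dh * l).
Proof.
  intros Hh Hf. apply (cara_comp D (fun _ => True)); auto. apply cara_of_derive; auto.
Qed.

Lemma cara_inv D f x l : cara D f x l -> f x <> 0 ->
  cara D (fun y => / f y) x (- / (f x) ^ 2 * l).
Proof.
  intros Hf Hn. apply (cara_smooth D Rinv f); auto.
  auto_derive; auto. field; auto.
Qed.

Lemma cara_exp D f x l : cara D f x l -> cara D (fun y => exp (f y)) x (exp (f x) * l).
Proof.
  intros Hf. apply (cara_smooth D exp f); auto.
  auto_derive; auto. ring.
Qed.

Lemma cara_opp D f x l : cara D f x l -> cara D (fun y => - f y) x (- l).
Proof.
  intros Hf. replace (-l) with (-1 * l) by ring. apply (cara_smooth D Ropp f); auto.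
  auto_derive; auto.
Qed.

Lemma cara_scal D f x l c : cara D f x l -> cara D (fun y => c * f y) x (c * l).
Proof.
  intros Hf. apply (cara_smooth D (fun z => c * z) f); auto.
  auto_derive; auto. ring.
Qed.

Definition GH (g g1 g2 g3 : R -> R) : Prop :=
  contin_on (fun u => 0 <= u) g /\
  deriv_on (fun u => 0 <= u) g g1 /\
  deriv_on (fun u => 0 <= u) g1 g2 /\
  deriv_on (fun u => 0 <= u) g2 g3 /\
  (forall u, 0 <= u -> 0 < g1 u) /\
  (forall u, 0 <= u -> 0 < g2 u) /\
  (forall u, 0 <= u -> 0 <= g1 u ^ 2 - g2 u) /\
  (forall u, 0 <= u -> 0 < 2 * g2 u ^ 2 - g1 u * g3 u).

Lemma upper_mono g g1 g2 g3 u M : GH g g1 g2 g3 -> 0 <= u <= M ->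
  RInt (kk g) u M + / exp (g M) * / g1 M <= / exp (g u) * / g1 u.
Proof.
  intros [Hgc [Hg1 [Hg2 [Hg3 [Hp1 [Hp2 [Hq1 Hq2]]]]]]] HuM.
  destruct (Req_dec u M) as [<-|Hne].
  { rewrite RInt_point. change (zero : R) with 0. lra. }
  set (Phi := fun y => RInt (kk g) u y + / exp (g y) * / g1 y).
  replace (/ exp (g u) * / g1 u) with (Phi u).
  2: { unfold Phi. rewrite RInt_point. change (zero : R) with 0. ring. }
  apply (mono_lemma u M Phi (fun y => kk g y + ((- / (exp (g y)) ^ 2 * (exp (g y) * g1 y)) * / g1 y
        + / exp (g y) * (- / (g1 y) ^ 2 * g2 y)))).
  lra.
  - intros y Hy. unfold Phi. apply cara_plus.
    apply cara_of_derive. apply kk_derive; auto.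
    assert (Cg : cara (fun z => u <= z <= M) g y (g1 y)).
    { apply cara_sub with (fun z => 0 <= z). apply dw_cara, Hg1. lra. intros; lra. }
    assert (Cg1 : cara (fun z => u <= z <= M) g1 y (g2 y)).
    { apply cara_sub with (fun z => 0 <= z). apply dw_cara, Hg2. lra. intros; lra. }
    apply (cara_mult _ (fun z => / exp (g z)) (fun z => / g1 z)).
    apply (cara_inv _ (fun z => exp (g z))). apply (cara_exp _ g); auto. apply Rgt_not_eq, exp_pos.
    apply (cara_inv _ g1); auto. apply Rgt_not_eq, Hp1. lra.
  - intros y Hy. rewrite kk_eq by lra.
    assert (0 < g1 y) by (apply Hp1; lra). assert (0 < g2 y) by (apply Hp2; lra).
    assert (0 < exp (g y)) by apply exp_pos.
    replace (/ exp (g y) + (- / exp (g y) ^ 2 * (exp (g y) * g1 y) * / g1 y +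
      / exp (g y) * (- / g1 y ^ 2 * g2 y))) with (- (/ exp (g y) * (g2 y / (g1 y) ^ 2))) by (field; lra).
    assert (0 <= / exp (g y) * (g2 y / g1 y ^ 2)).
    { apply Rmult_le_pos. left; apply Rinv_0_lt_compat; auto. 
      apply Rmult_le_pos. lra. left. apply Rinv_0_lt_compat. nra. }
    lra.
Qed.

Lemma mono2 a b f : a < b ->
  (forall y, a <= y <= b -> exists l, cara (fun z => a <= z <= b) f y l /\ l <= 0) -> f b <= f a.
Proof.
  intros Hab H.
  assert (Hd : forall y, exists l, a <= y <= b -> cara (fun z => a <= z <= b) f y l /\ l <= 0).
  { intros y. destruct (Rle_dec a y); destruct (Rle_dec y b).
    - destruct (H y) as [l Hl]. lra. exists l. auto.
    - exists 0. intros; lra.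
    - exists 0. intros; lra.
    - exists 0. intros; lra. }
  set (d := fun y => proj1_sig (constructive_indefinite_description _ (Hd y))).
  apply (mono_lemma a b f d Hab).
  - intros y Hy. unfold d. destruct (constructive_indefinite_description _ (Hd y)) as [l Hl]. simpl. apply Hl; auto.
  - intros y Hy. unfold d. destruct (constructive_indefinite_description _ (Hd y)) as [l Hl]. simpl. apply Hl; auto.
Qed.

Lemma mono_ge a b f : a <= b ->
  (forall y, a <= y <= b -> exists l, cara (fun z => a <= z <= b) f y l /\ 0 <= l) -> f a <= f b.
Proof.
  intros Hab H. destruct (Req_dec a b) as [<-|]. lra.
  assert (- f b <= - f a). 2: lra.
  apply (mono2 a b (fun y => - f y)). lra.
  intros y Hy. destruct (H y Hy) as [l [Hc Hl]]. exists (- l). split. apply cara_opp; auto. lra.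
Qed.

Lemma mono_le a b f : a <= b ->
  (forall y, a <= y <= b -> exists l, cara (fun z => a <= z <= b) f y l /\ l <= 0) -> f b <= f a.
Proof.
  intros Hab H. destruct (Req_dec a b) as [<-|]. lra. apply mono2; auto. lra.
Qed.

Lemma GH_cara g g1 g2 g3 a b y : GH g g1 g2 g3 -> 0 <= a -> a <= y <= b ->
  cara (fun z => a <= z <= b) g y (g1 y) /\ cara (fun z => a <= z <= b) g1 y (g2 y) /\
  cara (fun z => a <= z <= b) g2 y (g3 y).
Proof.
  intros [Hgc [Hg1 [Hg2 [Hg3 _]]]] Ha Hy.
  split; [|split]; apply cara_sub with (fun z => 0 <= z); try (apply dw_cara; [apply Hg1 || apply Hg2 || apply Hg3; lra]); intros; lra.
Qed.

Lemma lower_mono g g1 g2 g3 u M : GH g g1 g2 g3 -> 0 <= u <= M ->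
  / exp (g u) * (g1 u * / (g1 u * g1 u + g2 u)) <=
  RInt (kk g) u M + / exp (g M) * (g1 M * / (g1 M * g1 M + g2 M)).
Proof.
  intros HG HuM. pose proof HG as [Hgc [Hg1 [Hg2 [Hg3 [Hp1 [Hp2 [Hq1 Hq2]]]]]]].
  set (Psi := fun y => RInt (kk g) u y + / exp (g y) * (g1 y * / (g1 y * g1 y + g2 y))).
  replace (/ exp (g u) * (g1 u * / (g1 u * g1 u + g2 u))) with (Psi u).
  2: { unfold Psi. rewrite RInt_point. change (zero : R) with 0. ring. }
  change (Psi u <= Psi M). apply mono_ge. lra. intros y Hy.
  destruct (GH_cara g g1 g2 g3 u M y HG) as [Cg [Cg1 Cg2]]; try lra.
  assert (0 < g1 y) by (apply Hp1; lra). assert (0 < g2 y) by (apply Hp2; lra).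
  assert (0 < exp (g y)) by apply exp_pos.
  assert (0 < 2 * g2 y ^ 2 - g1 y * g3 y) by (apply Hq2; lra).
  eexists. split.
  - unfold Psi. apply cara_plus.
    apply cara_of_derive. apply kk_derive; eauto.
    apply (cara_mult _ (fun z => / exp (g z)) (fun z => g1 z * / (g1 z * g1 z + g2 z))).
    apply (cara_inv _ (fun z => exp (g z))). apply (cara_exp _ g); eauto. apply Rgt_not_eq, exp_pos.
    apply (cara_mult _ g1 (fun z => / (g1 z * g1 z + g2 z))); eauto.
    apply (cara_inv _ (fun z => g1 z * g1 z + g2 z)).
    apply (cara_plus _ (fun z => g1 z * g1 z) g2); eauto.
    apply (cara_mult _ g1 g1); eauto. nra.
  - rewrite kk_eq by lra. 
    set (e := exp (g y)). set (a1 := g1 y). set (a2 := g2 y). set (a3 := g3 y).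
    fold e a1 a2 a3 in H, H0, H1, H2.
    assert (Dp : 0 < a1 * a1 + a2) by nra.
    match goal with |- 0 <= ?X => replace X with ((2 * a2 ^ 2 - a1 * a3) / (e * (a1 * a1 + a2) ^ 2)) end.
    apply Rle_mult_inv_pos. lra. apply Rmult_lt_0_compat; nra.
    field. split; lra.
Qed.
Lemma I_bound g g1 g2 g3 u M : GH g g1 g2 g3 -> 0 <= u <= M ->
  RInt (kk g) u M <= / exp (g u) * / g1 u.
Proof.
  intros HG HuM. pose proof (upper_mono g g1 g2 g3 u M HG HuM).
  destruct HG as [_ [_ [_ [_ [Hp1 _]]]]].
  assert (0 < / exp (g M) * / g1 M).
  { apply Rmult_lt_0_compat; apply Rinv_0_lt_compat. apply exp_pos. apply Hp1; lra. }
  lra.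
Qed.

Lemma I_mono g u M1 M2 : contin_on (fun u => 0 <= u) g -> M1 <= M2 ->
  RInt (kk g) u M1 <= RInt (kk g) u M2.
Proof.
  intros Hgc H. rewrite (kk_chasles g u M1 M2); auto.
  pose proof (kk_int_ge0 g M1 M2 Hgc H). lra.
Qed.

Lemma Fint_char g g1 g2 g3 u : GH g g1 g2 g3 -> 0 <= u ->
  is_RInt_gen (fun s => / fexp g s) (at_point u) (Rbar_locally p_infty) (Fint g u) /\
  (forall M, u <= M -> RInt (kk g) u M <= Fint g u) /\
  Fint g u <= / exp (g u) * / g1 u /\
  (forall e, 0 < e -> exists M0, u <= M0 /\ forall M, M0 <= M -> Fint g u - e < RInt (kk g) u M).
Proof.
  intros HG Hu. pose proof HG as [Hgc _].
  set (E := fun z => exists M, u <= M /\ z = RInt (kk g) u M).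
  assert (Hb : bound E).
  { exists (/ exp (g u) * / g1 u). intros z [M [HM ->]]. apply (I_bound g g1 g2 g3); auto. }
  assert (Hne : exists z, E z). { exists (RInt (kk g) u u). exists u. split; auto. lra. }
  destruct (completeness E Hb Hne) as [m [Hub Hlub]].
  assert (Happ : forall e, 0 < e -> exists M0, u <= M0 /\ forall M, M0 <= M -> m - e < RInt (kk g) u M).
  { intros e He. apply NNPP. intros Hn.
    assert (is_upper_bound E (m - e)).
    { intros z [M [HM ->]]. destruct (Rle_dec (RInt (kk g) u M) (m - e)) as [|Hc]; auto.
      exfalso. apply Hn. exists M. split; auto. intros M' HM'.
      pose proof (I_mono g u M M' Hgc HM'). lra. }
    specialize (Hlub _ H). lra. }
  assert (Hup : forall M, u <= M -> RInt (kk g) u M <= m).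
  { intros M HM. apply Hub. exists M. auto. }
  assert (His : is_RInt_gen (kk g) (at_point u) (Rbar_locally p_infty) m).
  { intros P HP. apply loc_elim in HP. destruct HP as [d [Hd HP]].
    destruct (Happ d Hd) as [M0 [HM0 HM0']].
    apply Filter_prod with (fun a => a = u) (fun b => M0 < b).
    - reflexivity.
    - exists M0. auto.
    - intros a b -> Hb'. exists (RInt (kk g) u b). split.
      apply (RInt_correct (V := R_CompleteNormedModule)). apply kk_ex; auto.
      apply HP. specialize (HM0' b). specialize (Hup b).
      unfold Rabs. destruct Rcase_abs; lra. }
  assert (His2 : is_RInt_gen (fun s => / fexp g s) (at_point u) (Rbar_locally p_infty) m).
  { apply (is_RInt_gen_ext (kk g)); auto.
    apply Filter_prod with (fun a => a = u) (fun b => u < b).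
    - reflexivity.
    - exists u. auto.
    - intros a b -> Hb' x Hx. simpl in Hx. rewrite Rmin_left in Hx by lra.
      rewrite kk_eq by lra. reflexivity. }
  assert (Fint g u = m).
  { unfold Fint. apply is_RInt_gen_unique; auto. }
  rewrite H. split; auto. split; auto. split; auto.
  apply Hlub. intros z [M [HM ->]]. apply (I_bound g g1 g2 g3); auto.
Qed.
Lemma Fint_chasles g g1 g2 g3 a b : GH g g1 g2 g3 -> 0 <= a -> 0 <= b ->
  Fint g a = RInt (kk g) a b + Fint g b.
Proof.
  intros HG Ha Hb. pose proof HG as [Hgc _].
  destruct (Fint_char g g1 g2 g3 b HG Hb) as [Hb' _].
  assert (H1 : is_RInt (fun s => / fexp g s) a b (RInt (kk g) a b)).
  { apply (is_RInt_ext (kk g)). intros x Hx. rewrite kk_eq. reflexivity.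
    destruct Hx as [Hx _]. eapply Rle_trans; [|left; exact Hx]. apply Rmin_glb; auto.
    apply (RInt_correct (V := R_CompleteNormedModule)). apply kk_ex; auto. }
  apply is_RInt_gen_at_point in H1.
  pose proof (is_RInt_gen_Chasles _ _ _ _ H1 Hb') as H.
  unfold Fint at 1. rewrite (is_RInt_gen_unique (V := R_CompleteNormedModule) _ _ H). reflexivity.
Qed.

Lemma Fint_pos g g1 g2 g3 u : GH g g1 g2 g3 -> 0 <= u -> 0 < Fint g u.
Proof.
  intros HG Hu. pose proof HG as [Hgc _].
  destruct (Fint_char g g1 g2 g3 u HG Hu) as [_ [H _]].
  specialize (H (u + 1)). pose proof (kk_int_pos g u (u + 1) Hgc). 
  assert (u <= u + 1) by lra. assert (u < u + 1) by lra. specialize (H H1). specialize (H0 H2). lra.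
Qed.

Lemma Fint_strict g g1 g2 g3 a b : GH g g1 g2 g3 -> 0 <= a -> a < b -> Fint g b < Fint g a.
Proof.
  intros HG Ha Hab. pose proof HG as [Hgc _].
  rewrite (Fint_chasles g g1 g2 g3 a b HG Ha); try lra.
  pose proof (kk_int_pos g a b Hgc Hab). lra.
Qed.

Lemma Fint_inj g g1 g2 g3 a b : GH g g1 g2 g3 -> 0 <= a -> 0 <= b -> Fint g a = Fint g b -> a = b.
Proof.
  intros HG Ha Hb H. destruct (Rtotal_order a b) as [h|[h|h]]; auto.
  - pose proof (Fint_strict g g1 g2 g3 a b HG Ha h). lra.
  - pose proof (Fint_strict g g1 g2 g3 b a HG Hb h). lra.
Qed.

Lemma Fint_cara g g1 g2 g3 u : GH g g1 g2 g3 -> 0 <= u ->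
  cara (fun z => 0 <= z) (Fint g) u (- / exp (g u)).
Proof.
  intros HG Hu. pose proof HG as [Hgc _].
  apply cara_ext with (fun y => Fint g u + - RInt (kk g) u y) (0 + - kk g u); auto.
  - apply cara_plus. apply cara_const. apply (cara_opp _ (fun y => RInt (kk g) u y)).
    apply cara_of_derive. apply kk_derive; auto.
  - intros y Hy. rewrite (Fint_chasles g g1 g2 g3 u y); auto. ring.
  - rewrite kk_eq; auto. ring.
Qed.

Lemma g1_mono g g1 g2 g3 u M : GH g g1 g2 g3 -> 0 <= u <= M -> g1 u <= g1 M.
Proof.
  intros HG H. apply mono_ge. lra. intros y Hy.
  destruct (GH_cara g g1 g2 g3 u M y HG) as [_ [C _]]; try lra.
  exists (g2 y). split; auto. destruct HG as [_ [_ [_ [_ [_ [Hp2 _]]]]]]. left; apply Hp2; lra.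
Qed.

Lemma g_lin g g1 g2 g3 u M : GH g g1 g2 g3 -> 0 <= u <= M -> g u + g1 u * (M - u) <= g M.
Proof.
  intros HG H.
  assert (g u - g1 u * u <= g M - g1 u * M). 2: lra.
  apply (mono_ge u M (fun y => g y - g1 u * y)). lra. intros y Hy.
  destruct (GH_cara g g1 g2 g3 u M y HG) as [C _]; try lra.
  eexists. split. apply (cara_plus _ g (fun y => - (g1 u * y))). exact C.
  apply (cara_opp _ (fun y => g1 u * y)). 
  apply (cara_scal _ (fun y => y)). apply cara_id.
  pose proof (g1_mono g g1 g2 g3 u y HG). lra.
Qed.

Lemma Fint_lower g g1 g2 g3 u : GH g g1 g2 g3 -> 0 <= u ->
  / exp (g u) * (g1 u * / (g1 u * g1 u + g2 u)) <= Fint g u.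
Proof.
  intros HG Hu. pose proof HG as [Hgc [_ [_ [_ [Hp1 [Hp2 _]]]]]].
  destruct (Fint_char g g1 g2 g3 u HG Hu) as [_ [HF _]].
  set (psi := fun y => / exp (g y) * (g1 y * / (g1 y * g1 y + g2 y))).
  change (psi u <= Fint g u).
  apply Rnot_lt_le. intros Hlt.
  set (eps := psi u - Fint g u).
  assert (Heps : 0 < eps) by (unfold eps; lra).
  assert (Hc : 0 < g1 u) by (apply Hp1; lra). assert (He : 0 < exp (g u)) by apply exp_pos.
  set (M := u + / (exp (g u) * g1 u * g1 u * eps)).
  assert (HMu : M - u = / (exp (g u) * g1 u * g1 u * eps)) by (unfold M; ring).
  assert (HMu' : 0 < M - u).
  { rewrite HMu. apply Rinv_0_lt_compat. repeat apply Rmult_lt_0_compat; auto. }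
  assert (HM : u <= M) by lra.
  pose proof (lower_mono g g1 g2 g3 u M HG (conj Hu HM)) as HL. fold (psi u) (psi M) in HL.
  specialize (HF M HM).
  pose proof (g1_mono g g1 g2 g3 u M HG (conj Hu HM)) as Hg1M.
  pose proof (g_lin g g1 g2 g3 u M HG (conj Hu HM)) as HgM.
  assert (Hp2M : 0 < g2 M) by (apply Hp2; lra).
  assert (Hpsi : psi M < eps).
  { unfold psi.
    assert (H1 : g1 M * / (g1 M * g1 M + g2 M) <= / g1 u).
    { apply Rle_trans with (/ g1 M). 
      apply Rmult_le_reg_r with (g1 M * (g1 M * g1 M + g2 M)). nra.
      field_simplify; nra.
      apply Rinv_le_contravar; lra. }
    assert (H2 : / exp (g M) <= / (exp (g u) * (1 + g1 u * (M - u)))).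
    { apply Rinv_le_contravar. apply Rmult_lt_0_compat; auto. nra.
      apply Rle_trans with (exp (g u) * exp (g1 u * (M - u))).
      apply Rmult_le_compat_l. lra. apply exp_ineq1_le.
      rewrite <- exp_plus. apply exp_le_mono. lra. }
    apply Rle_lt_trans with (/ (exp (g u) * (1 + g1 u * (M - u))) * / g1 u).
    apply Rmult_le_compat; auto. left; apply Rinv_0_lt_compat, exp_pos.
    apply Rmult_le_pos. lra. left; apply Rinv_0_lt_compat. nra.
    rewrite HMu. 
    assert (Hgen : forall e c eps, 0<e -> 0<c -> 0<eps -> / (e * (1 + c * / (e*c*c*eps))) * / c < eps).
    { intros e c ep K1 K2 K3. assert (K4 : 0 < e * c * ep) by (repeat apply Rmult_lt_0_compat; auto). assert (K5 : 0 < e * c * c * ep) by (repeat apply Rmult_lt_0_compat; auto).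
      replace (/ (e * (1 + c * / (e*c*c*ep))) * / c) with (ep / (e*c*ep + 1)).
      apply Rmult_lt_reg_r with (e*c*ep + 1). nra.
      unfold Rdiv. rewrite Rmult_assoc, Rinv_l. nra. apply Rgt_not_eq. nra.
      field. repeat split; apply Rgt_not_eq; nra. }
    apply Hgen; auto. }
  unfold eps in Hpsi. lra.
Qed.

Lemma W_bounds g g1 g2 g3 u : GH g g1 g2 g3 -> 0 <= u ->
  0 < Fint g u /\ g1 u * (exp (g u) * Fint g u) <= 1 /\ g1 u <= (g1 u * g1 u + g2 u) * (exp (g u) * Fint g u).
Proof.
  intros HG Hu. pose proof HG as [Hgc [_ [_ [_ [Hp1 [Hp2 _]]]]]].
  assert (Hc : 0 < g1 u) by (apply Hp1; lra). assert (Hd : 0 < g2 u) by (apply Hp2; lra).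
  assert (He : 0 < exp (g u)) by apply exp_pos.
  split. apply (Fint_pos g g1 g2 g3); auto. split.
  - destruct (Fint_char g g1 g2 g3 u HG Hu) as [_ [_ [H _]]].
    apply Rmult_le_compat_l with (r := g1 u * exp (g u)) in H. 2: nra.
    replace (g1 u * exp (g u) * (/ exp (g u) * / g1 u)) with 1 in H by (field; lra). nra.
  - pose proof (Fint_lower g g1 g2 g3 u HG Hu) as H.
    apply Rmult_le_compat_l with (r := (g1 u * g1 u + g2 u) * exp (g u)) in H. 2: nra.
    replace ((g1 u * g1 u + g2 u) * exp (g u) * (/ exp (g u) * (g1 u * / (g1 u * g1 u + g2 u)))) with (g1 u) in H by (field; nra). nra.
Qed.
Lemma inv_cont (D : R -> Prop) (F phi v : R -> R) x :
  (forall a b, 0 <= a -> a < b -> F b < F a) ->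
  (forall y, D y -> 0 <= v y /\ F (v y) = phi y) -> D x ->
  filterlim phi (within D (locally x)) (locally (phi x)) ->
  filterlim v (within D (locally x)) (locally (v x)).
Proof.
  intros Hdec Hv Dx Hphi.
  apply fl_eps_intro. apply within_filter, locally_filter.
  intros e He. destruct (Hv x Dx) as [Hu0 HFu].
  set (u := v x) in *.
  assert (Hup : F (u + e) < F u) by (apply Hdec; lra).
  destruct (Rlt_le_dec (u - e) 0) as [Hneg|Hpos].
  - pose proof (fl_eps _ _ _ _ Hphi (F u - F (u + e))) as Hn.
    assert (Hn' := Hn ltac:(lra)).
    apply filter_imp with (2 := filter_and _ _ Hn' (within_D D x)).
    intros y [Hy Dy]. destruct (Hv y Dy) as [Hy0 HFy].
    rewrite <- HFy, <- HFu in Hy.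
    assert (v y < u + e).
    { apply Rnot_le_lt. intros Hc. destruct Hc as [Hc|Hc].
      pose proof (Hdec (u + e) (v y) ltac:(lra) Hc). revert Hy. unfold Rabs. destruct Rcase_abs; lra.
      rewrite <- Hc in Hy. revert Hy. unfold Rabs. destruct Rcase_abs; lra. }
    unfold Rabs. destruct Rcase_abs; lra.
  - assert (Hlo : F u < F (u - e)) by (apply Hdec; lra).
    pose proof (fl_eps _ _ _ _ Hphi (Rmin (F u - F (u + e)) (F (u - e) - F u))) as Hn.
    assert (Hn' := Hn ltac:(apply Rmin_pos; lra)).
    apply filter_imp with (2 := filter_and _ _ Hn' (within_D D x)).
    intros y [Hy Dy]. destruct (Hv y Dy) as [Hy0 HFy].
    rewrite <- HFy, <- HFu in Hy.
    assert (Hm1 := Rmin_l (F u - F (u + e)) (F (u - e) - F u)).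
    assert (Hm2 := Rmin_r (F u - F (u + e)) (F (u - e) - F u)).
    assert (Hab : Rabs (F (v y) - F u) < F u - F (u + e) /\ Rabs (F (v y) - F u) < F (u - e) - F u) by lra.
    clear Hy. destruct Hab as [Hy1 Hy2].
    assert (v y < u + e).
    { apply Rnot_le_lt. intros Hc. destruct Hc as [Hc|Hc].
      pose proof (Hdec (u + e) (v y) ltac:(lra) Hc). revert Hy1. unfold Rabs. destruct Rcase_abs; lra.
      rewrite <- Hc in Hy1. revert Hy1. unfold Rabs. destruct Rcase_abs; lra. }
    assert (u - e < v y).
    { apply Rnot_le_lt. intros Hc. destruct Hc as [Hc|Hc].
      pose proof (Hdec (v y) (u - e) ltac:(lra) Hc). revert Hy2. unfold Rabs. destruct Rcase_abs; lra.
      rewrite Hc in Hy2. revert Hy2. unfold Rabs. destruct Rcase_abs; lra. }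
    unfold Rabs. destruct Rcase_abs; lra.
Qed.

Lemma inv_cara (D : R -> Prop) (F phi v : R -> R) x lF lp :
  (forall a b, 0 <= a -> 0 <= b -> F a = F b -> a = b) ->
  (forall y, D y -> 0 <= v y /\ F (v y) = phi y) -> D x ->
  cara (fun z => 0 <= z) F (v x) lF -> lF <> 0 -> cara D phi x lp ->
  filterlim v (within D (locally x)) (locally (v x)) ->
  cara D v x (lp / lF).
Proof.
  intros Hinj Hv Dx [QF [HQFx [HQF HlF]]] HlF0 [Qp [HQpx [HQp Hlp]]] Hcv.
  destruct (Hv x Dx) as [Hx0 HFx].
  assert (HQne : forall u, 0 <= u -> QF u <> 0).
  { intros u Hu. destruct (Req_dec u (v x)) as [->|Hne]. rewrite HQFx; auto.
    intros H0. specialize (HQF u Hu). rewrite H0 in HQF.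
    apply Hne. apply Hinj; auto. lra. }
  exists (fun y => Qp y * / QF (v y)). split; [|split].
  - rewrite HQpx, HQFx. reflexivity.
  - intros y Dy. destruct (Hv y Dy) as [Hy0 HFy].
    specialize (HQF (v y) Hy0). specialize (HQp y Dy).
    rewrite HFy, HFx, HQp in HQF. specialize (HQne (v y) Hy0).
    apply Rmult_eq_reg_l with (QF (v y)); auto.
    rewrite <- HQF. field; auto.
  - apply fl_mult; auto. apply fl_inv; auto.
    eapply filterlim_comp; [|exact HlF].
    apply fl_to_within; auto.
    unfold within. apply filter_forall. intros y Dy. apply Hv; auto.
Qed.

Lemma Tpos s q : 1/2 <= s -> s <= 1 -> s - s*s <= q -> q <= s*s ->
 0 < (-25/2)*q + (175/4)*s + (35/2)*s*q + (5/4)*s*q^2 + (-55)*s^2 + (-37/4)*s^2*q + (-1/4)*s^2*q^2 + (127/4)*s^3 + (15/4)*s^3*q + (-43/4)*s^4 + (-1/2)*s^4*q + (5/2)*s^5 + (-1/4)*s^6.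
Proof.
intros.
set (sg := 2*s - 1). set (mu := q - (s - s*s)). 
assert (Hs : s = (sg + 1)/2) by (unfold sg; field).
assert (Hq : q = mu + s - s*s) by (unfold mu; ring).
assert (H3 : 0 <= sg <= 1) by (unfold sg; lra).
assert (H4 : 0 <= mu) by (unfold mu; lra).
assert (H5 : mu <= sg) by (unfold mu, sg; nra).
rewrite Hq. clearbody mu. rewrite Hs. clearbody sg. clear Hs Hq H H0 H1 H2.
match goal with |- 0 < ?X => replace X with
 (81/8 - 171/32 * mu + 9/16 * (mu*mu) + 171/32 * sg + 181/32 * (sg*mu) + 1/2 * (sg*(mu*mu))
  - 131/32 * (sg*sg) - 45/32 * (sg*sg*mu) - 1/16 * (sg*sg*(mu*mu)) + 21/32 * (sg*sg*sg)
  + 3/32 * (sg*sg*sg*mu) - 1/32 * (sg*sg*sg*sg)) by (field) end.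
assert (0 <= mu * mu) by nra.
assert (0 <= sg * mu) by nra.
assert (0 <= sg * (mu*mu)) by nra.
assert (sg * sg <= 1) by nra.
assert (sg * sg * mu <= 1) by nra.
assert (sg * sg * (mu*mu) <= 1) by nra.
assert (0 <= sg * sg * sg) by nra.
assert (0 <= sg * sg * sg * mu) by nra.
assert (sg * sg * sg * sg <= 1) by nra.
lra.
Qed.

Lemma final_alg e P1 P2 s q z :
  0 < s -> s <= 1 -> s <= s * s + q -> q <= s * s -> s * z <= 2 * (q * q) ->
  4 * (e - 1) = 1 - s ->
  4 * e * P1 = (2 + P1) * (s - q - s * s) ->
  P2 * (4 * e - (s - q - s * s)) =
    (2 + P1) ^ 2 * ((s-1)*(s-q-s*s)+(q-z-2*s*q-(q+s*s)*(s-1))) - 4 * e * P1 ^ 2 ->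
  0 <= P2 - (1 - s) * (2 + P1) ^ 2 - 8 * (2 + P1) + 16 * e.
Proof.
  intros Hs0 Hs1 Hsq Hq Hz HI HJ HK.
  assert (He : e = (5 - s) / 4) by lra. subst e.
  assert (HD : 0 < 4 * ((5 - s) / 4) - (s - q - s * s)) by nra.
  set (D := 4 * ((5 - s) / 4) - (s - q - s * s)) in *.
  assert (HP1 : P1 = 2 * (s - q - s * s) / D).
  { assert (P1 * D = 2 * (s - q - s * s)) by (unfold D; lra).
    rewrite <- H. field. lra. }
  assert (HP2 : P2 = ((2 + P1) ^ 2 * ((s-1)*(s-q-s*s)+(q-z-2*s*q-(q+s*s)*(s-1))) - 4 * ((5 - s) / 4) * P1 ^ 2) / D).
  { rewrite <- HK. field. lra. }
  set (H1 := s - q - s * s) in *.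
  set (H2 := (s-1)*(s-q-s*s)+(q-z-2*s*q-(q+s*s)*(s-1))) in *.
  set (E := (5 - s) / 4) in *.
  set (a := - H1).
  set (C := 4*E*E*H2-E*a*a+a*(4*E+a)*((E-1)*(8*E+a)+4*E+a)).
  assert (HQ : P2 - (1 - s) * (2 + P1) ^ 2 - 8 * (2 + P1) + 16 * E = 16 * C / D ^ 3).
  { rewrite HP2, HP1. unfold C, a, D, H2, H1, E. field. unfold D, H1, E in HD. lra. }
  rewrite HQ.
  assert (HC : 0 <= C).
  {
    assert (Hs2 : 1/2 <= s) by nra.
    pose proof (Tpos s q Hs2 Hs1 ltac:(lra) Hq) as HT.
    assert (Hb : 0 <= q + s * s - s) by lra.
    assert (Hcs : s * C = (q + s * s - s) *
      ((-25/2)*q + (175/4)*s + (35/2)*s*q + (5/4)*s*q^2 + (-55)*s^2 + (-37/4)*s^2*q + (-1/4)*s^2*q^2 + (127/4)*s^3 + (15/4)*s^3*q + (-43/4)*s^4 + (-1/2)*s^4*q + (5/2)*s^5 + (-1/4)*s^6)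
      + 4 * E * E * (2 * (q * q) - s * z)).
    { unfold C, a, H2, H1, E. field. }
    assert (0 <= 4 * E * E * (2 * (q * q) - s * z)).
    { apply Rmult_le_pos. unfold E. nra. lra. }
    assert (0 <= s * C) by nra.
    nra. }
  apply Rmult_le_pos. lra. left. apply Rinv_0_lt_compat. apply pow_lt. auto.
Qed.

Theorem lemma3p5
  (g g1 g2 g3 : R -> R)
  (Hgc : contin_on (fun u => 0 <= u) g)
  (Hg1 : deriv_on (fun u => 0 <= u) g g1)
  (Hg2 : deriv_on (fun u => 0 <= u) g1 g2)
  (Hg3 : deriv_on (fun u => 0 <= u) g2 g3)
  (Hg3c : contin_on (fun u => 0 <= u) g3)
  (Hpos1 : forall u, 0 <= u -> 0 < g1 u)
  (Hpos2 : forall u, 0 <= u -> 0 < g2 u)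
  (Hq1 : forall u, 0 <= u -> 0 <= g1 u ^ 2 - g2 u)
  (Hq2 : forall u, 0 <= u -> 0 < 2 * g2 u ^ 2 - g1 u * g3 u)
  (eta : R -> R)
  (Heta : forall y, - ln (Fint g 0) <= y ->
            0 <= eta y /\ Fint g (eta y) = exp (- y))
  (x x1 x2 : R -> R) (t0 : R)
  (Hx1 : deriv_on (fun t => t0 <= t) x x1)
  (Hx2 : deriv_on (fun t => t0 <= t) x1 x2)
  (Hx2c : contin_on (fun t => t0 <= t) x2)
  (Hxeq : forall t, t0 <= t ->
     4 * (exp (x t) - 1) =
     1 - g1 (eta (x t + 2 * t + ln 16)) * fexp g (eta (x t + 2 * t + ln 16))
           * Fint g (eta (x t + 2 * t + ln 16)))
  (Hxuniq : forall t y, t0 <= t -> - ln (Fint g 0) <= y + 2 * t + ln 16 ->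
     4 * (exp y - 1) =
     1 - g1 (eta (y + 2 * t + ln 16)) * fexp g (eta (y + 2 * t + ln 16))
           * Fint g (eta (y + 2 * t + ln 16)) -> y = x t)
  (Hx0 : x t0 + 2 * t0 + ln 16 = - ln (Fint g 0))
  (Hxbd : exists T, forall t, T <= t -> Rabs (x t) <= 1)
  (Hxi : forall t s, t0 <= t -> t < s ->
     x t + 2 * t + ln 16 < x s + 2 * s + ln 16)
  (v : R -> R)
  (Hv : forall r, 0 < r <= exp (- t0) ->
     0 <= v r /\ Fint g (v r) = r ^ 2 / 16 * exp (- x (- ln r))) :
  exists v1 v2 : R -> R,
    deriv_on (fun r => 0 < r <= exp (- t0)) v v1 /\
    deriv_on (fun r => 0 < r <= exp (- t0)) v1 v2 /\
    forall r, 0 < r <= exp (- t0) ->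
      0 <= v2 r + (10 - 1) / r * v1 r + fexp g (v r).
Proof.
  assert (HG : GH g g1 g2 g3) by (repeat split; auto).
  set (Dr := fun r => 0 < r <= exp (- t0)).
  assert (HtD : forall r, Dr r -> t0 <= - ln r).
  { intros r [H1 H2]. apply ln_le in H2; auto. rewrite ln_exp in H2. lra. }
  assert (CT : forall r, Dr r -> cara Dr (fun r => - ln r) r (- / r)).
  { intros r [H1 H2]. apply cara_of_derive. auto_derive. lra. field. lra. }
  assert (Cx : forall r, Dr r -> cara Dr (fun r => x (- ln r)) r (x1 (- ln r) * (- / r))).
  { intros r Hr. apply (cara_comp Dr (fun t => t0 <= t) x (fun r => - ln r)); auto.
    apply dw_cara, Hx1; auto. }
  assert (Cx1 : forall r, Dr r -> cara Dr (fun r => x1 (- ln r)) r (x2 (- ln r) * (- / r))).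
  { intros r Hr. apply (cara_comp Dr (fun t => t0 <= t) x1 (fun r => - ln r)); auto.
    apply dw_cara, Hx2; auto. }
  set (phi := fun r => r ^ 2 / 16 * exp (- x (- ln r))).
  set (dphi := fun r => r / 16 * exp (- x (- ln r)) * (2 + x1 (- ln r))).
  set (ddphi := fun r => exp (- x (- ln r)) / 16 * ((1 + x1 (- ln r)) * (2 + x1 (- ln r)) - x2 (- ln r))).
  assert (Cphi : forall r, Dr r -> cara Dr phi r (dphi r)).
  { intros r Hr. pose proof Hr as [Hr1 Hr2].
    eapply cara_ext.
    apply (cara_mult Dr (fun r => r ^ 2 / 16) (fun r => exp (- x (- ln r)))).
    apply cara_of_derive. auto_derive. auto. reflexivity.
    apply (cara_exp Dr (fun r => - x (- ln r))). apply (cara_opp Dr (fun r => x (- ln r))). apply Cx; auto.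
    intros; reflexivity. auto.
    unfold dphi. field. lra. }
  assert (Cdphi : forall r, Dr r -> cara Dr dphi r (ddphi r)).
  { intros r Hr. pose proof Hr as [Hr1 Hr2].
    eapply cara_ext.
    apply (cara_mult Dr (fun r => r / 16 * exp (- x (- ln r))) (fun r => 2 + x1 (- ln r))).
    apply (cara_mult Dr (fun r => r / 16) (fun r => exp (- x (- ln r)))).
    apply cara_of_derive. auto_derive. auto. reflexivity.
    apply (cara_exp Dr (fun r => - x (- ln r))). apply (cara_opp Dr (fun r => x (- ln r))). apply Cx; auto.
    apply (cara_plus Dr (fun _ => 2) (fun r => x1 (- ln r))). apply cara_const. apply Cx1; auto.
    intros; reflexivity. auto.
    unfold ddphi. field. lra. }
  assert (Hdec : forall a b, 0 <= a -> a < b -> Fint g b < Fint g a).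
  { intros a b Ha Hab. apply (Fint_strict g g1 g2 g3); auto. }
  assert (Hinj : forall a b, 0 <= a -> 0 <= b -> Fint g a = Fint g b -> a = b).
  { intros a b Ha Hb H. apply (Fint_inj g g1 g2 g3); auto. }
  assert (Hvphi : forall y, Dr y -> 0 <= v y /\ Fint g (v y) = phi y).
  { intros y Hy. apply Hv. exact Hy. }
  assert (Cvc : forall r, Dr r -> filterlim v (within Dr (locally r)) (locally (v r))).
  { intros r Hr. apply (inv_cont Dr (Fint g) phi v r Hdec Hvphi Hr).
    apply (cara_cont Dr phi r (dphi r)). apply Cphi; auto. }
  set (v1 := fun r => - exp (g (v r)) * dphi r).
  assert (Cv : forall r, Dr r -> cara Dr v r (v1 r)).
  { intros r Hr. destruct (Hvphi r Hr) as [Hv0 _].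
    eapply cara_ext.
    apply (inv_cara Dr (Fint g) phi v r (- / exp (g (v r))) (dphi r) Hinj Hvphi Hr).
    apply (Fint_cara g g1 g2 g3); auto.
    apply Ropp_neq_0_compat. apply Rgt_not_eq. apply Rinv_0_lt_compat, exp_pos.
    apply Cphi; auto. apply Cvc; auto.
    intros; reflexivity. auto.
    unfold v1. field. apply Rgt_not_eq, exp_pos. }
  assert (Cgen : forall (h h' : R -> R), deriv_on (fun u => 0 <= u) h h' ->
     forall r, Dr r -> cara Dr (fun r => h (v r)) r (h' (v r) * v1 r)).
  { intros h h' Hh r Hr. destruct (Hvphi r Hr) as [Hv0 _].
    apply (cara_comp Dr (fun u => 0 <= u) h v). apply dw_cara, Hh; auto. apply Cv; auto.
    intros y Hy. apply Hvphi; auto. }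
  assert (CG : forall r, Dr r -> cara Dr (fun r => exp (g (v r))) r (exp (g (v r)) * (g1 (v r) * v1 r))).
  { intros r Hr. apply (cara_exp Dr (fun r => g (v r))). apply Cgen; auto. }
  set (v2 := fun r => - (exp (g (v r)) * (g1 (v r) * v1 r)) * dphi r + - exp (g (v r)) * ddphi r).
  assert (Cv1 : forall r, Dr r -> cara Dr v1 r (v2 r)).
  { intros r Hr. unfold v1, v2.
    apply (cara_mult Dr (fun r => - exp (g (v r))) dphi).
    apply (cara_opp Dr (fun r => exp (g (v r)))). apply CG; auto. apply Cdphi; auto. }
  assert (HI : forall r, Dr r -> 4 * (exp (x (- ln r)) - 1) = 1 - g1 (v r) * exp (g (v r)) * phi r).
  { intros r Hr. pose proof Hr as [Hr1 Hr2]. pose proof (HtD r Hr) as ht.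
    assert (Hxi0 : - ln (Fint g 0) <= x (- ln r) + 2 * (- ln r) + ln 16).
    { destruct (Req_dec (- ln r) t0) as [E|E].
      rewrite E, Hx0. lra.
      pose proof (Hxi t0 (- ln r) (Rle_refl _) ltac:(lra)). rewrite Hx0 in H. lra. }
    destruct (Heta _ Hxi0) as [He0 HeF].
    assert (Hph : exp (- (x (- ln r) + 2 * - ln r + ln 16)) = phi r).
    { unfold phi. replace (- (x (- ln r) + 2 * - ln r + ln 16)) with (- x (- ln r) + ln r + ln r + - ln 16) by ring.
      rewrite !exp_plus, (exp_Ropp (ln 16)), !exp_ln by lra. field. }
    assert (Heq : eta (x (- ln r) + 2 * - ln r + ln 16) = v r).
    { apply Hinj; auto. apply Hvphi; auto. rewrite HeF, Hph. symmetry. apply Hvphi; auto. }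
    pose proof (Hxeq (- ln r) ht) as H. rewrite Heq in H. unfold fexp in H.
    rewrite (proj2 (Hvphi r Hr)) in H. exact H. }
  assert (Hacc : forall r, Dr r -> forall d, 0 < d -> exists y, Dr y /\ y <> r /\ Rabs (y - r) < d).
  { intros r [Hr1 Hr2] d Hd. exists (r - Rmin d r / 2).
    assert (0 < Rmin d r) by (apply Rmin_pos; auto).
    assert (Rmin d r <= d) by apply Rmin_l. assert (Rmin d r <= r) by apply Rmin_r.
    split. split; lra. split. lra. rewrite Rabs_left; lra. }
  set (dL := fun r => -4 * exp (x (- ln r)) * x1 (- ln r) * / r).
  set (dR := fun r => - (g2 (v r) * v1 r * exp (g (v r)) * phi r + g1 (v r) * (exp (g (v r)) * (g1 (v r) * v1 r)) * phi r + g1 (v r) * exp (g (v r)) * dphi r)).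
  set (ddL := fun r => 4 * exp (x (- ln r)) * (x1 (- ln r) * x1 (- ln r) + x2 (- ln r) + x1 (- ln r)) / r ^ 2).
  assert (CL : forall r, Dr r -> cara Dr (fun r => 4 * (exp (x (- ln r)) - 1)) r (dL r)).
  { intros r Hr. pose proof Hr as [Hr1 Hr2]. eapply cara_ext.
    apply (cara_scal Dr (fun r => exp (x (- ln r)) + - 1)).
    apply (cara_plus Dr (fun r => exp (x (- ln r))) (fun _ => - 1)).
    apply (cara_exp Dr (fun r => x (- ln r))). apply Cx; auto. apply cara_const.
    intros; reflexivity. auto. unfold dL. field. lra. }
  assert (CR : forall r, Dr r -> cara Dr (fun r => 1 - g1 (v r) * exp (g (v r)) * phi r) r (dR r)).
  { intros r Hr. eapply cara_ext.
    apply (cara_plus Dr (fun _ => 1) (fun r => - (g1 (v r) * exp (g (v r)) * phi r))).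
    apply cara_const.
    apply (cara_opp Dr (fun r => g1 (v r) * exp (g (v r)) * phi r)).
    apply (cara_mult Dr (fun r => g1 (v r) * exp (g (v r))) phi).
    apply (cara_mult Dr (fun r => g1 (v r)) (fun r => exp (g (v r)))).
    apply (Cgen g1 g2 Hg2); auto. apply CG; auto. apply Cphi; auto.
    intros; reflexivity. auto. unfold dR. ring. }
  assert (HJ : forall r, Dr r -> dL r = dR r).
  { intros r Hr. apply (cara_unique Dr (fun r => 4 * (exp (x (- ln r)) - 1)) r).
    apply CL; auto. eapply cara_ext. apply CR; auto. intros y Hy. symmetry. apply HI; auto. auto. reflexivity.
    apply Hacc; auto. }
  assert (CdL : forall r, Dr r -> cara Dr dL r (ddL r)).
  { intros r Hr. pose proof Hr as [Hr1 Hr2]. eapply cara_ext.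
    apply (cara_mult Dr (fun r => -4 * exp (x (- ln r)) * x1 (- ln r)) (fun r => / r)).
    apply (cara_mult Dr (fun r => -4 * exp (x (- ln r))) (fun r => x1 (- ln r))).
    apply (cara_scal Dr (fun r => exp (x (- ln r)))).
    apply (cara_exp Dr (fun r => x (- ln r))). apply Cx; auto. apply Cx1; auto.
    apply (cara_inv Dr (fun r => r)). apply cara_id. lra.
    intros; reflexivity. auto. unfold ddL. field. lra. }
  exists v1, v2. split; [|split].
  { intros r Hr. apply cara_dw. apply Cv; auto. }
  { intros r Hr. apply cara_dw. apply Cv1; auto. }
  intros r Hr. change (Dr r) in Hr. pose proof Hr as [Hr1 Hr2].
  eassert (CdR : cara Dr dR r _).
  { unfold dR.
    apply (cara_opp Dr (fun r => g2 (v r) * v1 r * exp (g (v r)) * phi r + g1 (v r) * (exp (g (v r)) * (g1 (v r) * v1 r)) * phi r + g1 (v r) * exp (g (v r)) * dphi r)).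
    apply (cara_plus Dr (fun r => g2 (v r) * v1 r * exp (g (v r)) * phi r + g1 (v r) * (exp (g (v r)) * (g1 (v r) * v1 r)) * phi r) (fun r => g1 (v r) * exp (g (v r)) * dphi r)).
    apply (cara_plus Dr (fun r => g2 (v r) * v1 r * exp (g (v r)) * phi r) (fun r => g1 (v r) * (exp (g (v r)) * (g1 (v r) * v1 r)) * phi r)).
    - apply (cara_mult Dr (fun r => g2 (v r) * v1 r * exp (g (v r))) phi).
      apply (cara_mult Dr (fun r => g2 (v r) * v1 r) (fun r => exp (g (v r)))).
      apply (cara_mult Dr (fun r => g2 (v r)) v1).
      apply (Cgen g2 g3 Hg3); auto. apply Cv1; auto. apply CG; auto. apply Cphi; auto.
    - apply (cara_mult Dr (fun r => g1 (v r) * (exp (g (v r)) * (g1 (v r) * v1 r))) phi).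
      apply (cara_mult Dr (fun r => g1 (v r)) (fun r => exp (g (v r)) * (g1 (v r) * v1 r))).
      apply (Cgen g1 g2 Hg2); auto.
      apply (cara_mult Dr (fun r => exp (g (v r))) (fun r => g1 (v r) * v1 r)).
      apply CG; auto.
      apply (cara_mult Dr (fun r => g1 (v r)) v1).
      apply (Cgen g1 g2 Hg2); auto. apply Cv1; auto. apply Cphi; auto.
    - apply (cara_mult Dr (fun r => g1 (v r) * exp (g (v r))) dphi).
      apply (cara_mult Dr (fun r => g1 (v r)) (fun r => exp (g (v r)))).
      apply (Cgen g1 g2 Hg2); auto. apply CG; auto. apply Cdphi; auto. }
  assert (CdR' : cara Dr dR r (ddL r)).
  { eapply cara_ext. apply CdL; auto. intros y Hy. apply HJ; auto. auto. reflexivity. }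
  pose proof (cara_unique Dr dR r _ _ CdR CdR' (Hacc r Hr)) as HK.
  pose proof (HJ r Hr) as HJr. pose proof (HI r Hr) as HIr.
  destruct (Hvphi r Hr) as [Hv0 HFv].
  destruct (W_bounds g g1 g2 g3 (v r) HG Hv0) as [HF0 [Hb1 Hb2]].
  rewrite HFv in HF0, Hb1, Hb2.
  assert (Hp1 := Hpos1 (v r) Hv0). assert (Hp2 := Hpos2 (v r) Hv0).
  assert (Hr1' := Hq1 (v r) Hv0). assert (Hr2' := Hq2 (v r) Hv0).
  unfold fexp.
  unfold v2, dL, dR, ddL in *. unfold v1 in *. unfold ddphi, dphi, phi in *. cbv beta in *.
  rewrite (exp_Ropp (x (- ln r))) in *.
  assert (He : 0 < exp (x (- ln r))) by apply exp_pos.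
  assert (HGp : 0 < exp (g (v r))) by apply exp_pos.
  set (e := exp (x (- ln r))) in *. set (P1 := x1 (- ln r)) in *. set (P2 := x2 (- ln r)) in *.
  set (G := exp (g (v r))) in *. set (a1 := g1 (v r)) in *. set (a2 := g2 (v r)) in *.
  set (a3 := g3 (v r)) in *.
  clear - HK HJr HIr HF0 Hb1 Hb2 Hp1 Hp2 Hr1' Hr2' He HGp Hr1.

  set (W := G * (r ^ 2 / 16 * / e)) in *.
  assert (HW : 0 < W) by (unfold W; apply Rmult_lt_0_compat; auto).
  match goal with |- 0 <= ?X => replace X with
    (W / r ^ 2 * (P2 - (1 - a1 * W) * (2 + P1) ^ 2 - 8 * (2 + P1) + 16 * e)) end.
  2: { unfold W. field. split; apply Rgt_not_eq; auto. }
  apply Rmult_le_pos.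
  { apply Rmult_le_pos. lra. left. apply Rinv_0_lt_compat. apply pow_lt. auto. }
  apply (final_alg e P1 P2 (a1 * W) (a2 * (W * W)) (a3 * (W * W * W))).
  - apply Rmult_lt_0_compat; auto.
  - exact Hb1.
  - apply Rmult_le_compat_r with (r := W) in Hb2. 2: lra.
    replace (a1 * W * (a1 * W) + a2 * (W * W)) with ((a1 * a1 + a2) * W * W) by ring. exact Hb2.
  - assert (0 <= (a1 ^ 2 - a2) * (W * W)). apply Rmult_le_pos; auto. nra.
    replace (a1 * W * (a1 * W) - a2 * (W * W)) with ((a1 ^ 2 - a2) * (W * W)) by ring. lra.
  - assert (0 <= (2 * a2 ^ 2 - a1 * a3) * (W * W * W * W)).
    apply Rmult_le_pos. lra. assert (0 < W * W) by nra. nra.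
    replace (2 * (a2 * (W * W) * (a2 * (W * W))) - a1 * W * (a3 * (W * W * W))) with ((2 * a2 ^ 2 - a1 * a3) * (W * W * W * W)) by ring.
    lra.
  - rewrite HIr. unfold W. ring.
  - match type of HJr with ?L = ?R =>
      assert (Hid : 4 * e * P1 - (2 + P1) * (a1 * W - a2 * (W * W) - a1 * W * (a1 * W)) = - r * (L - R)) end.
    { unfold W. field. split; apply Rgt_not_eq; auto. }
    rewrite HJr in Hid. replace (- r * (_ - _)) with 0 in Hid by ring. lra.
  - match type of HJr with ?L = ?R => match type of HK with ?KL = ?KR =>
      assert (Hid : P2 * (4 * e - (a1 * W - a2 * (W * W) - a1 * W * (a1 * W))) -
        ((2 + P1) ^ 2 * ((a1 * W - 1) * (a1 * W - a2 * (W * W) - a1 * W * (a1 * W)) +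
          (a2 * (W * W) - a3 * (W * W * W) - 2 * (a1 * W) * (a2 * (W * W)) - (a2 * (W * W) + a1 * W * (a1 * W)) * (a1 * W - 1))) - 4 * e * P1 ^ 2)
        = r ^ 2 * (KR - KL) + r * (L - R)) end end.
    { unfold W. field. split; apply Rgt_not_eq; auto. }
    rewrite HJr, HK in Hid. replace (r ^ 2 * (_ - _) + r * (_ - _)) with 0 in Hid by ring. lra.
Qed.
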